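(* Let $T>0$, $0<\eta<T$ and $\alpha>\frac{1}{\eta}$. If $y\in C([0,T],[0,\infty))$, then the problem \[ u''(t)+y(t)=0,\quad t\in(0,T),\qquad u'(0)=0,\quad u(T)=\alpha\int_0^{\eta}u(s)\,ds \] has no positive solution.
   Context: A positive solution means a solution $u$ of the problem with $u(t)\ge 0$ for all $t\in[0,T]$ and $u$ not identically zero. *)

(* Defs.v *)
From Stdlib Require Import Reals.
From Coquelicot Require Import Coquelicot.
Open Scope R_scope.

Definition cont_on_0T (T : R) (f : R -> R) : Prop :=
  forall t, 0 <= t <= T ->
    filterlim f (within (fun x => 0 <= x <= T) (locally t)) (locally (f t)).

(* u is a solution of  u'' + y = 0 on (0,T),  u'(0) = 0,
   u(T) = alpha * \int_0^eta u(s) ds,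
   in the class C[0,T] /\ C^2(0,T) with (right) derivative at 0 equal to 0. *)
Definition is_solution (T eta alpha : R) (y u : R -> R) : Prop :=
  cont_on_0T T u /\
  (exists du : R -> R,
      (forall t, 0 < t < T -> is_derive u t (du t)) /\
      (forall t, 0 < t < T -> is_derive du t (- y t))) /\
  filterlim (fun h => (u h - u 0) / h) (at_right 0) (locally 0) /\
  u T = alpha * RInt u 0 eta.

Definition is_positive_solution (T eta alpha : R) (y u : R -> R) : Prop :=
  is_solution T eta alpha y u /\
  (forall t, 0 <= t <= T -> 0 <= u t) /\
  (exists t, 0 <= t <= T /\ u t <> 0).

(* Main.v *)
Require Import Defs.
From Stdlib Require Import Reals Lra.
From Coquelicot Require Import Coquelicot.
Open Scope R_scope.

Lemma ball_R (x e y : R) : ball x e y <-> Rabs (y - x) < e.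
Proof. split; intro H; exact H. Qed.

Lemma clamp_lip (T x z : R) : 0 < T ->
  Rabs (Rmax 0 (Rmin T z) - Rmax 0 (Rmin T x)) <= Rabs (z - x).
Proof.
  intros hT. unfold Rmax, Rmin.
  repeat (destruct Rle_dec); split_Rabs; lra.
Qed.

Lemma clamp_in (T x : R) : 0 < T -> 0 <= Rmax 0 (Rmin T x) <= T.
Proof. intros hT. unfold Rmax, Rmin. repeat (destruct Rle_dec); lra. Qed.

Lemma clamp_id (T x : R) : 0 <= x <= T -> Rmax 0 (Rmin T x) = x.
Proof. intros H. unfold Rmax, Rmin. repeat (destruct Rle_dec); lra. Qed.

Theorem lemma2p3 (T eta alpha : R) (y : R -> R)
  (hT : 0 < T) (heta : 0 < eta < T) (halpha : alpha > 1 / eta)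
  (hyc : cont_on_0T T y) (hy0 : forall t, 0 <= t <= T -> 0 <= y t) :
  ~ (exists u : R -> R, is_positive_solution T eta alpha y u).
Proof.
  intros [u [[Hc [[du [Hdu Hddu]] [Hr HuT]]] [Hpos [t0 [Ht0 Hne]]]]].
  set (v := fun x => u (Rmax 0 (Rmin T x))).
  assert (Hveq : forall x, 0 <= x <= T -> v x = u x).
  { intros x Hx. unfold v. now rewrite clamp_id. }
  assert (Hvc : forall x, continuous v x).
  { intros x P [eps HP].
    set (cx := Rmax 0 (Rmin T x)).
    destruct (Hc cx (clamp_in T x hT) (ball (u cx) eps) (locally_ball _ _)) as [d Hd].
    exists d. intros z Hz. apply HP. unfold v. apply Hd.
    - apply ball_R. apply ball_R in Hz. unfold cx.
      eapply Rle_lt_trans; [apply clamp_lip; exact hT| exact Hz].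
    - apply clamp_in; exact hT. }
  assert (Hvcp : forall x, continuity_pt v x).
  { intros x. apply continuity_pt_filterlim. apply Hvc. }
  assert (Hvd : forall x, 0 < x < T -> is_derive v x (du x)).
  { intros x Hx. apply is_derive_ext_loc with u; [|apply Hdu; exact Hx].
    assert (Hp : 0 < Rmin x (T - x)) by (apply Rmin_pos; lra).
    exists (mkposreal _ Hp). intros z Hz. change (Rabs (z - x) < Rmin x (T - x)) in Hz.
    symmetry. apply Hveq.
    assert (Rmin x (T - x) <= x) by apply Rmin_l.
    assert (Rmin x (T - x) <= T - x) by apply Rmin_r.
    apply Rabs_def2 in Hz. lra. }
  assert (Hdudec : forall a b, 0 < a <= b -> b < T -> du b <= du a).
  { intros a b Hab HbT.
    assert (Hm := MVT_gen du a b (fun t => - y t)).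
    cbv zeta in Hm. rewrite Rmin_left, Rmax_right in Hm by lra.
    destruct Hm as [c [Hc1 Hc2]].
    - intros x Hx. apply Hddu. lra.
    - intros x Hx. apply continuity_pt_filterlim. apply (ex_derive_continuous (K := R_AbsRing) (V := R_NormedModule) du x).
      exists (- y x). apply Hddu. lra.
    - assert (0 <= y c) by (apply hy0; lra). nra. }
  assert (Hduneg : forall t, 0 < t < T -> du t <= 0).
  { intros t Ht. destruct (Rle_dec (du t) 0) as [|Hgt]; [assumption|].
    apply Rnot_le_lt in Hgt. exfalso.
    destruct (Hr (ball 0 (mkposreal _ Hgt)) (locally_ball _ _)) as [d Hd].
    set (h := Rmin (d / 2) (t / 2)).
    assert (Hh1 : h <= d / 2) by apply Rmin_l.
    assert (Hh2 : h <= t / 2) by apply Rmin_r.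
    assert (Hh0 : 0 < h) by (apply Rmin_pos; destruct d; simpl; lra).
    assert (Hb := Hd h).
    assert (Hb2 : Rabs ((u h - u 0) / h - 0) < du t).
    { apply ball_R. apply Hb; [apply ball_R; destruct d; simpl in *; split_Rabs; lra | lra]. }
    set (df := fun x => if Rlt_dec 0 x then du x else du t).
    assert (Hm := MVT_gen v 0 h df).
    cbv zeta in Hm. rewrite Rmin_left, Rmax_right in Hm by lra.
    destruct Hm as [c [Hc1 Hc2]].
    - intros x Hx. unfold df. destruct (Rlt_dec 0 x); [|lra]. apply Hvd. lra.
    - intros x _. apply Hvcp.
    - assert (Hdf : df c >= du t).
      { unfold df. destruct (Rlt_dec 0 c).
        + apply Rle_ge, Hdudec; lra.
        + lra. }
      rewrite !Hveq in Hc2 by lra.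
      assert (Heq : (u h - u 0) / h = df c) by (rewrite Hc2; field; lra).
      rewrite Heq in Hb2. split_Rabs; lra. }
  set (dd := fun x => if Rlt_dec 0 x then if Rlt_dec x T then du x else 0 else 0).
  assert (Hmono : forall a b, 0 <= a <= b -> b <= T -> u b <= u a).
  { intros a b Hab HbT.
    assert (Hm := MVT_gen v a b dd).
    cbv zeta in Hm. rewrite Rmin_left, Rmax_right in Hm by lra.
    destruct Hm as [c [Hc1 Hc2]].
    - intros x Hx. unfold dd. destruct (Rlt_dec 0 x); [|lra].
      destruct (Rlt_dec x T); [|lra]. apply Hvd. lra.
    - intros x _. apply Hvcp.
    - assert (Hdf : dd c <= 0).
      { unfold dd. destruct (Rlt_dec 0 c); [|lra].
        destruct (Rlt_dec c T); [|lra]. apply Hduneg. lra. }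
      rewrite !Hveq in Hc2 by lra. nra. }
  assert (Hex : forall a b, ex_RInt v a b).
  { intros a b. apply (ex_RInt_continuous (V := R_CompleteNormedModule)). intros z _. apply Hvc. }
  assert (HI : RInt u 0 eta = RInt v 0 eta).
  { apply RInt_ext. rewrite Rmin_left, Rmax_right by lra.
    intros x Hx. symmetry. apply Hveq. lra. }
  assert (Hlow : forall s, 0 < s <= eta -> s * u s <= RInt v 0 eta).
  { intros s Hs.
    rewrite <- (RInt_Chasles v 0 s eta) by apply Hex.
    assert (H1 : RInt (fun _ => u s) 0 s <= RInt v 0 s).
    { apply RInt_le; [lra | apply ex_RInt_const | apply Hex |].
      intros x Hx. rewrite Hveq by lra. apply Hmono; lra. }
    assert (H2 : RInt (fun _ => 0) s eta <= RInt v s eta).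
    { apply RInt_le; [lra | apply ex_RInt_const | apply Hex |].
      intros x Hx. rewrite Hveq by lra. apply Hpos; lra. }
    rewrite !RInt_const in H1, H2.
    unfold scal in H1, H2; simpl in H1, H2. unfold mult in H1, H2; simpl in H1, H2.
    unfold plus; simpl. nra. }
  assert (Hae : alpha * eta > 1).
  { apply Rmult_gt_compat_r with (r := eta) in halpha; [|lra].
    unfold Rdiv in halpha. rewrite Rmult_1_l, Rinv_l in halpha by lra. lra. }
  assert (Halpha0 : alpha > 0).
  { destruct (Rle_dec alpha 0); [|lra]. nra. }
  assert (HuT0 : u T = 0).
  { assert (A := Hlow eta (conj (proj1 heta) (Rle_refl _))).
    assert (B := Hmono eta T ltac:(lra) ltac:(lra)).
    assert (C := Hpos T ltac:(lra)).
    rewrite HI in HuT. nra. }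
  assert (Hzero : forall s, 0 < s <= eta -> u s = 0).
  { intros s Hs. assert (A := Hlow s Hs). rewrite HI in HuT.
    assert (RInt v 0 eta = 0) by nra.
    assert (0 <= u s) by (apply Hpos; lra). nra. }
  destruct (Rlt_dec 0 t0) as [Ht0p|Ht0n].
  - apply Hne. assert (A := Hmono (Rmin t0 eta) t0).
    assert (Rmin t0 eta <= t0) by apply Rmin_l.
    assert (Rmin t0 eta <= eta) by apply Rmin_r.
    assert (0 < Rmin t0 eta) by (apply Rmin_pos; lra).
    rewrite (Hzero (Rmin t0 eta)) in A by lra. assert (0 <= u t0) by (apply Hpos; lra).
    assert (u t0 <= 0) by (apply A; lra). lra.
  - assert (t0 = 0) by lra. subst t0.
    assert (Hu0 : 0 < u 0) by (assert (0 <= u 0) by (apply Hpos; lra); lra).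
    destruct (Hc 0 ltac:(lra) (ball (u 0) (mkposreal _ Hu0)) (locally_ball _ _)) as [d Hd].
    set (z := Rmin (d / 2) eta).
    assert (z <= d / 2) by apply Rmin_l.
    assert (z <= eta) by apply Rmin_r.
    assert (0 < z) by (apply Rmin_pos; destruct d; simpl; lra).
    assert (Hb : ball (u 0) (mkposreal _ Hu0) (u z)).
    { apply Hd; [apply ball_R; destruct d; simpl in *; split_Rabs; lra | lra]. }
    apply ball_R in Hb. change (Rabs (u z - u 0) < u 0) in Hb. rewrite (Hzero z) in Hb by lra.
    rewrite Rabs_left in Hb; lra.
Qed.
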